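(* Let $k\ge 1$ and let $F$ be a partially colored forest. If Alice can win the $k$-Modified Coloring Game on $\mathcal{R}(F)$, then she can win the $k$-coloring game on $F$.
   Context: All graphs are finite. A partial coloring of a graph assigns to some vertices colors from a fixed set $C$ of $k$ colors so that adjacent colored vertices receive different colors. A color $\alpha\in C$ is legal for an uncolored vertex $v$ if no neighbor of $v$ is colored $\alpha$. The $k$-coloring game on a (partially colored) graph $G$: Alice and Bob alternate turns, Alice first, each turn coloring an uncolored vertex with a legal color from $C$. If at any point some uncolored vertex has no legal color, Bob wins; if every vertex becomes colored, Alice wins. The $k$-Modified Coloring Game ($k$-MCG) is the same except that Bob plays first and Bob may choose to pass on any turn. For a partially colored forest $F$, a trunk of $F$ is a maximal connected subgraph $R$ of $F$ such that every colored vertex of $R$ is a leaf of $R$ (so each uncolored vertex lies in exactly one trunk, and a colored vertex of degree $d$ lies in exactly $d$ trunks). $\mathcal{R}(F)$ denotes the partially colored forest that is the disjoint union of all trunks of $F$ (a colored vertex lying in several trunks appears as a separate copy, with its color, in each of them). *)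

(* Defs.v *)
From mathcomp Require Import all_boot.
Set Implicit Arguments. Unset Strict Implicit. Unset Printing Implicit Defensive.

Definition simple_graph (T : finType) (e : rel T) : Prop :=
  symmetric e /\ irreflexive e.

Definition forest (T : finType) (e : rel T) : Prop :=
  simple_graph e /\ ~ (exists s : seq T, [/\ 2 < size s, uniq s & cycle e s]).

(* c v = None means v is uncolored. *)
Definition proper_partial (T : finType) (e : rel T) (k : nat)
  (c : T -> option 'I_k) : Prop :=
  forall x y, e x y -> c x != None -> c x != c y.

Section Game.
Variables (T : finType) (e : rel T) (k : nat).

Definition legal (c : T -> option 'I_k) (v : T) (a : 'I_k) : bool :=
  [forall w, e v w ==> (c w != Some a)].

Definition all_colored (c : T -> option 'I_k) : Prop := forall v, c v != None.

Definition stuck (c : T -> option 'I_k) : Prop :=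
  exists v, c v = None /\ forall a, ~~ legal c v a.

Definition upd (c : T -> option 'I_k) (v : T) (a : 'I_k) : T -> option 'I_k :=
  fun w => if w == v then Some a else c w.

(* Alice has a winning strategy, from position c.
   [AliceTurn pass c]: Alice is to move; [BobTurn pass c]: Bob is to move.
   If [pass = true], Bob may pass on any of his turns. *)
Inductive AliceTurn (pass : bool) : (T -> option 'I_k) -> Prop :=
| A_done c : all_colored c -> AliceTurn pass c
| A_move c v a : ~ stuck c -> c v = None -> legal c v a ->
    BobTurn pass (upd c v a) -> AliceTurn pass c
with BobTurn (pass : bool) : (T -> option 'I_k) -> Prop :=
| B_done c : all_colored c -> BobTurn pass c
| B_all c : ~ stuck c ->
    (forall v a, c v = None -> legal c v a -> AliceTurn pass (upd c v a)) ->
    (pass = true -> AliceTurn pass c) ->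
    BobTurn pass c.

(* k-coloring game: Alice first, no passing. *)
Definition alice_wins_cg (c : T -> option 'I_k) : Prop := AliceTurn false c.
(* k-Modified Coloring Game: Bob first, Bob may pass. *)
Definition alice_wins_mcg (c : T -> option 'I_k) : Prop := BobTurn true c.

End Game.

Section Trunks.
Variables (V : finType) (e : rel V) (k : nat) (c : V -> option 'I_k).

(* a (sub)graph: vertex set and set of ordered edges (symmetric) *)
Definition SG := ({set V} * {set V * V})%type.

Definition is_subgraph (G : SG) : bool :=
  [forall x, forall y, ((x, y) \in G.2) ==>
     [&& e x y, x \in G.1, y \in G.1 & (y, x) \in G.2]].

Definition sg_rel (G : SG) : rel V := fun a b => (a, b) \in G.2.

Definition sg_connected (G : SG) : bool :=
  (G.1 != set0) && [forall x in G.1, forall y in G.1, connect (sg_rel G) x y].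

Definition sg_deg (G : SG) (x : V) : nat := #|[set y | (x, y) \in G.2]|.

Definition trunk_cond (G : SG) : bool :=
  [&& is_subgraph G, sg_connected G &
      [forall x in G.1, (c x != None) ==> (sg_deg G x == 1)]].

Definition sg_le (G H : SG) : bool := (G.1 \subset H.1) && (G.2 \subset H.2).

Definition is_trunk (G : SG) : bool :=
  trunk_cond G && [forall H : SG, (trunk_cond H && sg_le G H) ==> (H == G)].

(* vertices of R(F): pairs (trunk, vertex of that trunk) *)
Definition RV := {p : SG * V | is_trunk p.1 && (p.2 \in p.1.1)}.

Definition Redge : rel RV := fun x y =>
  ((val x).1 == (val y).1) && (((val x).2, (val y).2) \in (val x).1.2).

Definition Rcol : RV -> option 'I_k := fun x => c (val x).2.

End Trunks.

(* Main.v *)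
Require Import Defs.
From mathcomp Require Import all_boot.
From mathcomp Require Import zify.
Set Implicit Arguments. Unset Strict Implicit. Unset Printing Implicit Defensive.

Scheme AT_min := Minimality for AliceTurn Sort Prop with BT_min := Minimality for BobTurn Sort Prop.

Section L.
Variables (k : nat) (V : finType) (e : rel V) (c : V -> option 'I_k).
Hypothesis Hf : forest e.

Lemma sym_e : symmetric e. Proof. by case: Hf => [[]]. Qed.
Lemma irr_e : irreflexive e. Proof. by case: Hf => [[]]. Qed.

Lemma sub_ok (G : SG V) : is_subgraph e G -> forall x y, (x,y) \in G.2 ->
  [&& e x y, x \in G.1, y \in G.1 & (y,x) \in G.2].
Proof. by move=> /forallP H x y; apply: (implyP (forallP (H x) y)). Qed.

Lemma tc_sub (T : SG V) : trunk_cond e c T -> is_subgraph e T.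
Proof. by case/and3P. Qed.

Lemma tc_conn (T : SG V) x y : trunk_cond e c T -> x \in T.1 -> y \in T.1 ->
  connect (sg_rel T) x y.
Proof.
case/and3P=> _ /andP[_ /forallP H] _ hx hy.
exact: (implyP (forallP (implyP (H x) hx) y) hy).
Qed.

Lemma tc_leaf (T : SG V) x : trunk_cond e c T -> x \in T.1 -> c x != None ->
  sg_deg T x = 1.
Proof.
case/and3P=> _ _ /forallP H hx hc.
by apply/eqP; apply: (implyP (implyP (H x) hx) hc).
Qed.

Lemma tc_deg (T : SG V) x y1 y2 : trunk_cond e c T -> c x != None ->
  (x, y1) \in T.2 -> (x, y2) \in T.2 -> y1 = y2.
Proof.
move=> hT hc h1 h2.
have hx : x \in T.1 by case/and4P: (sub_ok (tc_sub hT) h1).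
have := tc_leaf hT hx hc; rewrite /sg_deg => hd.
apply/eqP; apply: contraT => hne.
have : #|[set y1; y2]| <= #|[set y | (x, y) \in T.2]|.
  by apply: subset_leq_card; apply/subsetP=> y; rewrite !inE => /orP[]/eqP->.
by rewrite cards2 hne hd.
Qed.

Lemma upath (T : SG V) (x y : V) : connect (sg_rel T) x y ->
  exists p, [/\ path (sg_rel T) x p, uniq (x :: p) & last x p = y].
Proof.
case/connectP=> p hp ->; case: (shortenP hp) => p' hp' hu _.
by exists p'.
Qed.

Lemma sgrel_e (T : SG V) : is_subgraph e T -> subrel (sg_rel T) e.
Proof. by move=> hT x y /(sub_ok hT) /andP[]. Qed.

Lemma belast_uncol (T : SG V) (v : V) p : trunk_cond e c T -> path (sg_rel T) v p ->
  uniq (v :: p) -> c v = None -> all (fun x => c x == None) (belast v p).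
Proof.
move=> hT; elim: p v => [|w p IH] v //=.
case/andP=> hvw hp /andP[hv hu] cv; rewrite cv eqxx /=.
case: p IH hp hu hv => [|u p] IH hp hu hv //.
apply: IH => //.
case: (c w =P None) => // /eqP hcw; exfalso.
have hwv : (w, v) \in T.2 by case/and4P: (sub_ok (tc_sub hT) hvw).
move: hp => /= /andP[hwu _].
have := tc_deg hT hcw hwv hwu => evu.
by move: hv; rewrite evu !inE eqxx orbT.
Qed.

Lemma trunk_tc (T : SG V) : is_trunk e c T -> trunk_cond e c T.
Proof. by case/andP. Qed.

Lemma trunk_max (T H : SG V) : is_trunk e c T -> trunk_cond e c H ->
  sg_le T H -> H = T.
Proof.
case/andP=> _ /forallP hm hH hle.
by apply/eqP; apply: (implyP (hm H)); rewrite hH hle.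
Qed.

Lemma closure (T : SG V) v w : is_trunk e c T -> v \in T.1 -> c v = None ->
  e v w -> (v, w) \in T.2.
Proof.
move=> hT hv cv evw; have hTc := trunk_tc hT; have hs := tc_sub hTc.
case: (boolP (w \in T.1)) => hw.
  apply: contraT => hnot; exfalso.
  have [p [hp hu hl]] := upath (tc_conn hTc hv hw).
  case: Hf => _; apply; exists (v :: p); split => //.
    case: p hp hu hl => [|a [|b p]] /= hp hu hl.
    - by move: evw; rewrite -hl irr_e.
    - by move: hp; rewrite andbT hl /sg_rel (negbTE hnot).
    - by [].
  rewrite /cycle rcons_path hl sym_e evw andbT.
  by apply: (sub_path (sgrel_e hs)); exact: hp.
pose H : SG V := (w |: T.1, (v, w) |: ((w, v) |: T.2)).
have hwv : w != v by apply/eqP => ewv; move: hw; rewrite ewv hv.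
have hsH : is_subgraph e H.
  apply/forallP=> x; apply/forallP=> y; apply/implyP.
  rewrite /H /= !inE !xpair_eqE => /orP[/andP[/eqP-> /eqP->]|/orP[/andP[/eqP-> /eqP->]|hxy]].
  - by rewrite evw hv !eqxx /= !orbT.
  - by rewrite sym_e evw hv !eqxx /= !orbT.
  - by case/and4P: (sub_ok hs hxy) => -> -> -> ->; rewrite !orbT.
have hcH : forall x, x \in T.1 -> connect (sg_rel H) v x.
  move=> x hx; have := tc_conn hTc hv hx.
  apply: connect_sub => a b hab; apply: connect1.
  by move: hab; rewrite /sg_rel /H /= !inE => ->; rewrite !orbT.
have hcH' : forall x, x \in H.1 -> connect (sg_rel H) v x /\ connect (sg_rel H) x v.
  move=> x; rewrite /H /= !inE => /orP[/eqP->|hx].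
    by split; apply: connect1; rewrite /sg_rel /= !inE eqxx ?orbT.
  split; first exact: hcH.
  have := tc_conn hTc hx hv.
  apply: connect_sub => a b hab; apply: connect1.
  by move: hab; rewrite /sg_rel /H /= !inE => ->; rewrite !orbT.
have htH : trunk_cond e c H.
  apply/and3P; split => //.
    apply/andP; split.
      by apply/set0Pn; exists w; rewrite /H /= !inE ?eqxx.
    apply/forallP=> x; apply/implyP=> hx; apply/forallP=> y; apply/implyP=> hy.
    by apply: connect_trans (proj2 (hcH' x hx)) (proj1 (hcH' y hy)).
  apply/forallP=> x; apply/implyP; rewrite /H /= !inE => /orP[/eqP->|hx]; apply/implyP=> hcx.
    apply/eqP; rewrite /sg_deg /= -(cards1 v); apply: eq_card => y.
    rewrite !inE !xpair_eqE (negbTE hwv) /= eqxx /=.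
    case: (boolP ((w, y) \in T.2)) => hwy; last by rewrite orbF.
    by case/and4P: (sub_ok hs hwy) => _ hw'; rewrite hw' in hw.
  have hxv : x != v by apply: contraNneq hcx => ->; rewrite cv.
  have hxw : x != w by apply: contraNneq hw => <-.
  rewrite /sg_deg /= -(tc_leaf hTc hx hcx) /sg_deg.
  apply/eqP; apply: eq_card => y; rewrite !inE !xpair_eqE.
  by rewrite (negbTE hxv) (negbTE hxw).
have := trunk_max hT htH.
rewrite /sg_le /H /= subsetU1 => /(_ (subset_trans (subsetU1 _ _) (subsetU1 _ _))) hHT.
by rewrite -hHT /= !inE !eqxx.
Qed.


Lemma exists_trunk v : c v = None -> exists T : SG V, is_trunk e c T && (v \in T.1).
Proof.
move=> cv.
pose H0 : SG V := ([set v], set0).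
have h0 : trunk_cond e c H0 && sg_le H0 H0.
  rewrite /sg_le !subxx !andbT; apply/and3P; split.
  - by apply/forallP=> x; apply/forallP=> y; rewrite /H0 /= in_set0.
  - apply/andP; split; first by apply/set0Pn; exists v; rewrite inE.
    apply/forallP=> x; apply/implyP; rewrite inE => /eqP->.
    by apply/forallP=> y; apply/implyP; rewrite inE => /eqP->; apply: connect0.
  - by apply/forallP=> x; apply/implyP; rewrite /H0 /= inE => /eqP->; rewrite cv.
case: (@arg_maxnP _ H0 (fun H : SG V => trunk_cond e c H && sg_le H0 H) (fun H : SG V => #|H.1| + #|H.2|) h0) => T /andP[hT hle] hmax.
exists T; apply/andP; split; last first.
  by move/andP: hle => [/subsetP /(_ v) + _]; rewrite /H0 /= inE eqxx; apply.
apply/andP; split=>//; apply/forallP=> H; apply/implyP=> /andP[hH hTH].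
have hH0 : trunk_cond e c H && sg_le H0 H.
  rewrite hH /=; move: hle hTH; rewrite /sg_le => /andP[a1 a2] /andP[b1 b2].
  by rewrite (subset_trans a1 b1) (subset_trans a2 b2).
have := hmax H hH0.
move: hTH; rewrite /sg_le; case: H {hH hH0} => [H1 H2]; case: T {hT hle hmax} => [T1 T2] /=.
move=> /andP[s1 s2] hc.
have c1 := subset_leq_card s1; have c2 := subset_leq_card s2.
rewrite xpair_eqE; apply/andP; split; rewrite eq_sym eqEcard ?s1 ?s2 /=.
  by rewrite -(leq_add2r #|H2|) (leq_trans hc) // leq_add2l.
by rewrite -(leq_add2l #|H1|) (leq_trans hc) // leq_add2r.
Qed.

Lemma closure_path (T : SG V) a p : is_trunk e c T -> path e a p ->
  all (fun x => c x == None) (belast a p) -> a \in T.1 -> all (fun x => x \in T.1) (a :: p).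
Proof.
move=> hT; elim: p a => [|w p IH] a /=; first by move=> _ _ ->.
case/andP=> eaw hp /andP[/eqP ca hb] ha; rewrite ha /=.
have hw := closure hT ha ca eaw.
case/and4P: (sub_ok (tc_sub (trunk_tc hT)) hw) => _ _ hw' _.
exact: IH.
Qed.

Lemma trunk_uniq (T1 T2 : SG V) v : is_trunk e c T1 -> is_trunk e c T2 ->
  v \in T1.1 -> v \in T2.1 -> c v = None -> T1 = T2.
Proof.
move=> hT1 hT2 hv1 hv2 cv.
have hT1c := trunk_tc hT1; have hs1 := tc_sub hT1c.
have hs2 := tc_sub (trunk_tc hT2).
have hV : forall x, x \in T1.1 -> x \in T2.1.
  move=> x hx; have [p [hp hu hl]] := upath (tc_conn hT1c hv1 hx).
  have hb := belast_uncol hT1c hp hu cv.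
  have := closure_path hT2 (sub_path (sgrel_e hs1) hp) hb hv2.
  by move/allP => /(_ x); rewrite -hl mem_last; apply.
suff hle : sg_le T1 T2 by rewrite (trunk_max hT1 (trunk_tc hT2) hle).
apply/andP; split; apply/subsetP; first exact: hV.
case=> a b hab; case/and4P: (sub_ok hs1 hab) => eab ha hb hba.
case: (c a =P None) => ca; first exact: closure hT2 (hV _ ha) ca eab.
case: (c b =P None) => cb.
  have eba : e b a by rewrite sym_e.
  have := closure hT2 (hV _ hb) cb eba.
  by move=> h; case/and4P: (sub_ok hs2 h).
exfalso.
have [p [hp hu hl]] := upath (tc_conn hT1c hv1 ha).
have hbl := belast_uncol hT1c hp hu cv.
move: hp hu hl hbl; case/lastP: p => [|p' a'].
  by move=> _ _ /= ea; move: cv; rewrite ea => /ca.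
rewrite last_rcons rcons_path belast_rcons => /andP[_ hq] _ ea hbl; subst a'.
have cq : c (last v p') = None by apply/eqP; move/allP: hbl; apply; apply: mem_last.
have hqa : (a, last v p') \in T1.2 by case/and4P: (sub_ok hs1 hq).
have := tc_deg hT1c (introN eqP ca) hab hqa.
by move=> ebq; apply: cb; rewrite ebq.
Qed.


Notation RT := (@RV V e k c).
Notation RE := (@Redge V e k c).

Definition img (c' : V -> option 'I_k) : RT -> option 'I_k := fun x => c' (val x).2.
Definition ext (c' : V -> option 'I_k) := forall w, c w != None -> c' w = c w.

Lemma rv_trunk (x : RT) : is_trunk e c (val x).1 /\ (val x).2 \in (val x).1.1.
Proof. by case/andP: (valP x). Qed.

Lemma redge_e (x y : RT) : RE x y -> e (val x).2 (val y).2.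
Proof.
case/andP=> _ h; have [hT _] := rv_trunk x.
by case/and4P: (sub_ok (tc_sub (trunk_tc hT)) h).
Qed.

Lemma copy v : c v = None -> exists x : RT, (val x).2 = v.
Proof.
move=> cv; have [T hT] := exists_trunk cv.
by exists (Sub (T, v) hT).
Qed.

Lemma copy_uniq (x y : RT) : (val x).2 = (val y).2 -> c (val x).2 = None -> x = y.
Proof.
move=> h cx; have [hx vx] := rv_trunk x; have [hy vy] := rv_trunk y.
have cy : c (val y).2 = None by rewrite -h.
rewrite h in vx.
have := trunk_uniq hx hy vx vy cy => hT.
apply: val_inj; case: (val x) h hT => [a b]; case: (val y) => [a' b'] /= -> ->.
by [].
Qed.

Lemma nbr (x : RT) w : c (val x).2 = None -> e (val x).2 w ->
  exists y : RT, RE x y /\ (val y).2 = w.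
Proof.
move=> cx ew; have [hT hv] := rv_trunk x.
have hxw := closure hT hv cx ew.
have hw : w \in (val x).1.1 by case/and4P: (sub_ok (tc_sub (trunk_tc hT)) hxw).
have hy : is_trunk e c ((val x).1, w).1 && (((val x).1, w).2 \in ((val x).1, w).1.1).
  by rewrite /= hT hw.
exists (Sub ((val x).1, w) hy); split => //.
by rewrite /Redge SubK /= eqxx hxw.
Qed.

Lemma legal_iff (c' : V -> option 'I_k) (s : RT -> option 'I_k) (x : RT) a :
  s =1 img c' -> c (val x).2 = None -> legal RE s x a = legal e c' (val x).2 a.
Proof.
move=> hs cx; apply/forallP/forallP => h w; apply/implyP => hw.
  have [y [hxy hyw]] := nbr cx hw.
  by have := implyP (h y) hxy; rewrite hs /img hyw.
by have := implyP (h (val w).2) (redge_e hw); rewrite hs.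
Qed.

Lemma ext_upd c' v a : ext c' -> c v = None -> ext (upd c' v a).
Proof.
move=> h cv w cw; rewrite /upd; case: eqP => [ewv|_]; last exact: h.
by move: cw; rewrite ewv cv.
Qed.

Lemma upd_img c' (s : RT -> option 'I_k) (x : RT) a : s =1 img c' ->
  c (val x).2 = None -> upd s x a =1 img (upd c' (val x).2 a).
Proof.
move=> hs cx y; rewrite /upd /img; case: eqP => [->|nyx]; first by rewrite eqxx.
case: eqP => [eyx|_]; last exact: hs.
by exfalso; apply: nyx; apply: (copy_uniq eyx); rewrite eyx.
Qed.

Lemma ext_none c' v : ext c' -> c' v = None -> c v = None.
Proof. by move=> h cv; case E: (c v) => [b|] //; have := h v; rewrite E cv; move/(_ isT). Qed.

Lemma allcol_img c' (s : RT -> option 'I_k) : ext c' -> s =1 img c' ->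
  all_colored s -> all_colored c'.
Proof.
move=> he hs ha v; apply/eqP => cv.
have [x hx] := copy (ext_none he cv).
by have := ha x; rewrite hs /img hx cv.
Qed.

Lemma nstuck_img c' (s : RT -> option 'I_k) : ext c' -> s =1 img c' ->
  ~ stuck RE s -> ~ stuck e c'.
Proof.
move=> he hs hn [v [cv hl]]; apply: hn.
have cv0 := ext_none he cv.
have [x hx] := copy cv0.
exists x; split; first by rewrite hs /img hx.
move=> a; rewrite (legal_iff a hs) hx //; exact: hl.
Qed.

Lemma sim (s : RT -> option 'I_k) : AliceTurn RE true s ->
  forall c', ext c' -> s =1 img c' -> AliceTurn e false c'.
Proof.
move=> hA.
apply: (@AT_min _ RE k true
  (fun s => forall c', ext c' -> s =1 img c' -> AliceTurn e false c')
  (fun s => forall c', ext c' -> s =1 img c' -> BobTurn e false c')) hA.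
- by move=> s0 ha c' he hs; apply: A_done; apply: allcol_img ha.
- move=> s0 x a hn sx hl _ IH c' he hs.
  have cx' : c' (val x).2 = None by rewrite -/(img c' x) -hs.
  have cx := ext_none he cx'.
  apply: (@A_move _ _ _ _ _ (val x).2 a).
  + exact: nstuck_img hn.
  + exact: cx'.
  + by rewrite -(legal_iff a hs cx).
  + apply: IH; first exact: ext_upd.
    exact: upd_img.
- by move=> s0 ha c' he hs; apply: B_done; apply: allcol_img ha.
- move=> s0 hn _ IH _ _ c' he hs.
  apply: B_all => //; first exact: nstuck_img hn.
  move=> v a cv hl.
  have [x hx] := copy (ext_none he cv).
  have cx : c (val x).2 = None by rewrite hx; apply: ext_none cv.
  have hux := upd_img a hs cx; rewrite hx in hux.
  apply: (IH x a) => //.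
    by rewrite hs /img hx.
  by rewrite (legal_iff a hs cx) hx.
  exact: ext_upd (ext_none he cv).
Qed.

End L.

Theorem lemma2p1 (k : nat) (V : finType) (e : rel V) (c : V -> option 'I_k) :
  0 < k -> forest e -> proper_partial e c ->
  alice_wins_mcg (@Redge V e k c) (@Rcol V e k c) ->
  alice_wins_cg e c.
Proof.
move=> _ hF _ hB.
have he : ext c c by [].
suff : forall s, BobTurn (@Redge V e k c) true s -> s =1 @img k V e c c -> AliceTurn e false c.
  by apply; [exact: hB | by []].
move=> s; case=> [s0 ha | s0 _ _ hp] hs.
  by apply: A_done; exact: (allcol_img he hs ha).
exact: (sim hF (hp erefl) he hs).
Qed.
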